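(* Let $G$ be a commutative group, $g\in\mathrm{Aut}(G)$, and $t_1,t_2$ fixed points of $g$. Define $f_i(x)=g(x)t_i$ for $i=1,2$. If there is $z\in G$ with $g(z)=z^{-1}t_1^{-1}t_2$, then $G(f_1)$ and $G(f_2)$ are isotopic.
   Context: Construction $G(f)$: for a commutative group $G$ (written multiplicatively) and a bijection $f:G\to G$, let $\overline{G}=\{\overline{x}:x\in G\}$ be a disjoint copy of $G$, and let $G(f)$ be $G\cup\overline{G}$ with multiplication $x*y=xy$, $x*\overline{y}=\overline{xy}$, $\overline{x}*y=\overline{xy}$, $\overline{x}*\overline{y}=f(xy)$ for $x,y\in G$. Loops $(Q_1,* )$ and $(Q_2,\circ)$ are isotopic if there are bijections $\alpha,\beta,\gamma:Q_1\to Q_2$ with $\alpha(u)\circ\beta(v)=\gamma(u*v)$ for all $u,v\in Q_1$. *)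

(* Defs.v *)
(* A commutative group G is modelled as a zmodType (written
   additively): xy ~ x + y, x^{-1} ~ - x, 1 ~ 0. *)
From HB Require Import structures.
From mathcomp Require Import all_boot all_order all_algebra.
Set Implicit Arguments. Unset Strict Implicit. Unset Printing Implicit Defensive.
Import GRing.Theory.
Local Open Scope ring_scope.

(* The construction G(f): carrier G + G, where inl x = x and inr x = \bar x. *)
Definition Gf (G : zmodType) (f : G -> G) (u v : G + G) : G + G :=
  match u, v with
  | inl x, inl y => inl (x + y)
  | inl x, inr y => inr (x + y)
  | inr x, inl y => inr (x + y)
  | inr x, inr y => inl (f (x + y))
  end.

Definition isotopic (Q1 Q2 : Type) (m1 : Q1 -> Q1 -> Q1) (m2 : Q2 -> Q2 -> Q2) : Prop :=
  exists (alpha beta gamma : Q1 -> Q2),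
    [/\ bijective alpha, bijective beta, bijective gamma &
        forall u v, m2 (alpha u) (beta v) = gamma (m1 u v)].

(* Main.v *)
Require Import Defs.
From HB Require Import structures.
From mathcomp Require Import all_boot all_order all_algebra.
Import GRing.Theory.
Local Open Scope ring_scope.

Definition shiftS (G : zmodType) (a b : G) (u : G + G) : G + G :=
  match u with inl x => inl (x + a) | inr x => inr (x + b) end.

Lemma shiftS_bij (G : zmodType) (a b : G) : bijective (@shiftS G a b).
Proof.
exists (@shiftS G (- a) (- b)) => -[x|x] /=; by rewrite ?addrK ?subrK.
Qed.

Theorem lemma6p1 (G : zmodType) (g : G -> G) (t1 t2 : G)
  (g_morph : forall x y : G, g (x + y) = g x + g y)
  (g_bij : bijective g)
  (ht1 : g t1 = t1) (ht2 : g t2 = t2)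
  (hz : exists z : G, g z = - z - t1 + t2) :
  isotopic (Gf (fun x => g x + t1)) (Gf (fun x => g x + t2)).
Proof.
case: hz => z hz.
have g0 : g 0 = 0.
  by apply: (addrI (g 0)); rewrite -g_morph !addr0.
have gN : g (- z) = - g z.
  apply/eqP; rewrite -subr_eq0 opprK -g_morph addNr g0 //.
exists (@shiftS G 0 (- z)), (@shiftS G z 0), (@shiftS G z 0).
split; try exact: shiftS_bij.
move=> [x|x] [y|y] /=; rewrite ?addr0 //.
- by rewrite addrA.
- by rewrite addrA addrAC subrK.
- congr (inl _).
  rewrite (addrAC x) (g_morph (x + y)) gN hz !opprD !opprK -!addrA; congr (_ + _).
  by rewrite addNr addr0 addrC.
Qed.
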